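(* Let $c$ be a prime of the form $2^r\cdot 3+1$ ($r\ge1$), and let $a,b>1$ be integers with $a,b,c$ pairwise coprime and $e_c(b)=3$. Suppose positive integers $z,Y,Z$ with $z\le Z$ and $Y\equiv 4\pmod 6$ satisfy $a+b=c^z$ and $a+b^Y=c^Z$, and let $e=\nu_c((Y-1)/3)$. Then \[ c^z(2b+1)+(Y-1)(b^2+b+1)\equiv 0\pmod{c^{2(z-e)}}. \]
   Context: For a positive integer $M$ and an integer $A$ coprime to $M$, $e_M(A)$ denotes the least positive integer $e$ such that $A^e\equiv \pm1\pmod M$. $\nu_c$ is the $c$-adic valuation. *)

(* Defs.v *)
From mathcomp Require Import all_boot.
Set Implicit Arguments. Unset Strict Implicit. Unset Printing Implicit Defensive.

Definition pm1_mod (M A e : nat) : bool :=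
  (A ^ e == 1 %[mod M]) || (M %| A ^ e + 1).

Definition e_ord_is (M A e : nat) : Prop :=
  0 < e /\ pm1_mod M A e /\ (forall k, 0 < k < e -> ~~ pm1_mod M A k).

(* Main.v *)
Require Import Defs.
From mathcomp Require Import all_boot all_algebra zify ring.
Set Implicit Arguments. Unset Strict Implicit. Unset Printing Implicit Defensive.

Lemma exp2K (w m : nat) : exists K, (1+w)^m = 1 + m*w + 'C(m,2)*w^2 + w^3*K.
Proof.
elim: m => [|m [K IH]]; first by exists 0; rewrite bin_small //; ring.
exists ('C(m,2) + K + w*K).
rewrite expnS IH binS bin1; ring.
Qed.

Lemma exp1K (w m : nat) : exists K, (1+w)^m = 1 + m*w + w^2*K.
Proof. have [K ->] := exp2K w m; exists ('C(m,2) + w*K); ring. Qed.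

Lemma lte_cop p w n : prime p -> p %| w -> 0 < w -> 0 < n -> ~~ (p %| n) ->
  logn p ((1+w)^n - 1) = logn p w.
Proof.
move=> pp pw w0 n0 pn.
have [K E] := exp1K w n.
have -> : (1+w)^n - 1 = w * (n + w*K) by rewrite E; lia.
rewrite lognM //; last by lia.
have cp : coprime p (n + w*K).
  by rewrite prime_coprime // dvdn_addl //; apply: dvdn_mulr.
by rewrite (logn_coprime cp) addn0.
Qed.

Lemma lte_p p w : prime p -> odd p -> p %| w -> 0 < w ->
  logn p ((1+w)^p - 1) = logn p w + 1.
Proof.
move=> pp op pw w0.
have [K E] := exp2K w p.
rewrite bin2odd // in E.
set q := p.-1./2 in E.
have p1 := prime_gt1 pp.
have -> : (1+w)^p - 1 = w * (p*(1+q*w) + w^2*K) by rewrite E; lia.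
have S0 : 0 < p*(1+q*w) + w^2*K by lia.
rewrite lognM //; congr (_ + _).
have d1 : p %| p*(1+q*w) + w^2*K.
  by rewrite dvdn_addr ?dvdn_mulr // expnS dvdn_mulr.
have d2 : ~~ (p^2 %| p*(1+q*w) + w^2*K).
  rewrite dvdn_addl; last by rewrite dvdn_mulr // dvdn_exp2r.
  rewrite expnS expn1 dvdn_pmul2l; last by lia.
  rewrite dvdn_addl; last by apply: dvdn_mull.
  by rewrite dvdn1; case: p pp p1 {op pw E q S0 d1} => [|[|]].
move: d1 d2; rewrite -{1}(expn1 p) !(pfactor_dvdn _ pp S0) => d1 d2; lia.
Qed.

Lemma lte p w m : prime p -> odd p -> p %| w -> 0 < w -> 0 < m ->
  logn p ((1+w)^m - 1) = logn p w + logn p m.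
Proof.
move=> pp op pw w0.
elim: m {-2}m (leqnn m) => [|N IH] m Hm m0; first by lia.
case pm: (p %| m); last first.
  have cp : coprime p m by rewrite prime_coprime // pm.
  by rewrite lte_cop ?pm // (logn_coprime cp) addn0.
have [m' Em] := dvdnP pm.
have p1 := prime_gt1 pp.
have m'0 : 0 < m' by move: m0; rewrite Em; case: m' {Em} => //.
have IHm := IH m' ltac:(lia) m'0.
have gt1 : 1 < (1+w)^m'.
  by rewrite -(exp1n m') ltn_exp2r //; lia.
set w' := (1+w)^m' - 1.
have Ew : (1+w)^m' = 1 + w' by rewrite /w'; lia.
have w'0 : 0 < w' by lia.
have pw' : p %| w'.
  rewrite -{1}(expn1 p) (pfactor_dvdn _ pp w'0) /w' IHm.
  move: pw; rewrite -{1}(expn1 p) (pfactor_dvdn _ pp w0); lia.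
rewrite Em expnM Ew lte_p // /w' IHm lognM ?(logn_prime _ pp) ?eqxx; lia.
Qed.

Lemma oddpow x k : x + 1 %| x ^ (2*k+1) + 1.
Proof.
elim: k => [|k IH]; first by rewrite muln0 add0n expn1.
have E : x ^ (2*k.+1+1) + 1 + x * (x + 1) = x^2 * (x ^ (2*k+1) + 1) + (x + 1).
  have -> : 2*k.+1+1 = (2*k+1) + 2 by lia.
  rewrite expnD; ring.
have H : x + 1 %| x ^ (2*k.+1+1) + 1 + x * (x + 1).
  by rewrite E dvdn_add // dvdn_mull.
by rewrite (dvdn_add_eq H) dvdn_mull.
Qed.

Theorem mainTheorem11 (r a b c z Y Z : nat) :
  1 <= r -> c = 2 ^ r * 3 + 1 -> prime c ->
  1 < a -> 1 < b ->
  coprime a b -> coprime a c -> coprime b c ->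
  e_ord_is c b 3 ->
  0 < z -> 0 < Y -> 0 < Z -> z <= Z -> Y = 4 %[mod 6] ->
  a + b = c ^ z -> a + b ^ Y = c ^ Z ->
  let e := logn c ((Y - 1) %/ 3) in
  c ^ (2 * (z - e)) %| c ^ z * (2 * b + 1) + (Y - 1) * (b ^ 2 + b + 1).
Proof.
move=> r1 Ec pc a1 b1 cab cac cbc [_ [pm3 npm]] z0 Y0 Z0 zZ Y6 E1 E2; cbv zeta.
have c7 : 7 <= c.
  have := leq_pexp2l (isT : 0 < 2) r1; rewrite expn1 => h; lia.
have codd : odd c.
  have -> : c = (2^(r-1)*3).*2 + 1.
    rewrite Ec -mul2n mulnA -expnS; congr (2 ^ _ * 3 + 1); lia.
  by rewrite addn1 /= odd_double.
pose k := Y %/ 6.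
pose m := 2*k+1.
have EY : Y = k * 6 + 4.
  have := divn_eq Y 6; rewrite Y6 => h; exact: h.
have EY1 : Y - 1 = 3* m by rewrite /m; lia.
have Em3 : (Y-1) %/ 3 = m by rewrite EY1 mulKn.
rewrite Em3 EY1.
have m0 : 0 < m by rewrite /m; lia.
have [b' Eb] : exists b', b = b'+1 by exists (b-1); lia.
pose u := b^2+b+1.
pose w := b^3 - 1.
have b3 : 0 < b^3 by rewrite expn_gt0; lia.
have Hw : b^3 = 1 + w by rewrite /w; lia.
have Hwu : w = b' * u.
  suff : b^3 = 1 + b' * u by rewrite /w; lia.
  rewrite /u Eb; ring.
have u0 : 0 < u by rewrite /u; lia.
have b'0 : 0 < b' by lia.
have w0 : 0 < w by rewrite Hwu muln_gt0 b'0 u0.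
have [K HK] := exp1K w m.
have HbY : b^Y = b * (1+w)^m.
  rewrite -Hw -expnM -expnS; congr (b ^ _); rewrite /m; lia.
pose D := m*w + w^2*K.
have HD : (1+w)^m = 1 + D by rewrite HK /D; lia.
have EZ : c^Z = c^z + b * D.
  have : c^Z + b = c^z + b * (1 + D) by rewrite -HD -HbY; lia.
  rewrite mulnDr muln1; lia.
have D0 : 0 < D.
  have : 0 < m * w by rewrite muln_gt0 m0 w0.
  rewrite /D; lia.
have cD : c^z %| D.
  have h1 : c^z %| c^z + b * D by rewrite -EZ dvdn_exp2l.
  rewrite dvdn_addr // in h1.
  rewrite Gauss_dvdr // in h1.
  by rewrite coprimeXl // coprime_sym.
have cD1 : c %| D.
  apply: dvdn_trans cD; rewrite -{1}(expn1 c); exact: dvdn_exp2l.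
have cw : c %| w.
  case/orP: pm3 => [h|h].
    by rewrite -(eqn_mod_dvd _ b3) //.
  exfalso.
  have h2 : c %| (b^3)^m + 1.
    apply: (dvdn_trans h); rewrite /m; exact: oddpow.
  rewrite Hw HD in h2.
  have h3 : c %| 2 by move: h2; rewrite (_ : 1 + D + 1 = D + 2); [rewrite (dvdn_addr _ cD1) | lia].
  have := dvdn_leq (isT : 0 < 2) h3; lia.
have ncb' : ~~ (c %| b').
  have := npm 1 isT; rewrite /pm1_mod expn1 negb_or => /andP [h _].
  by move: h; rewrite (eqn_mod_dvd _ (ltnW b1)) (_ : b - 1 = b') //; lia.
have cu : c %| u.
  by move: cw; rewrite Hwu Euclid_dvdM // (negbTE ncb').
have Hlog : z <= logn c u + logn c m.
  have ED : D = (1+w)^m - 1 by rewrite HD addKn.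
  have := cD; rewrite (pfactor_dvdn _ pc D0) ED lte //.
  rewrite Hwu lognM // (@logn_coprime c b'); last by rewrite prime_coprime.
  by rewrite add0n.
pose t := z - logn c m.
have ctu : c^ t %| u by rewrite (pfactor_dvdn _ pc u0) /t; clear -Hlog; lia.
have ctz : c^ t %| c^z by rewrite dvdn_exp2l // /t leq_subr.
have c1 : 1 < c by apply: leq_trans c7.
have tZ : 2 * t <= Z.
  have [k0|kpos] := posnP k.
    have m1 : m = 1 by rewrite /m k0.
    have t1 : t = z by rewrite /t m1 logn1 subn0.
    rewrite t1.
    have K0 : w^2 * K = 0.
      by move: HK; rewrite m1 expn1 mul1n => HK; clear -HK; lia.
    have [v Ev] := dvdnP ctu; rewrite t1 in Ev.
    have v0 : 0 < v by move: u0; rewrite Ev; case: v {Ev}.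
    have cz0 : 0 < c^z by rewrite expn_gt0 (ltnW c1).
    case: (leqP (2*z) Z) => // hZ; exfalso.
    have EZ2 : c^Z = c^z * c^(Z-z) by rewrite -expnD subnKC.
    have E4 : c^(Z-z) = 1 + b*b'*v.
      apply/eqP; rewrite -(eqn_pmul2l cz0) -EZ2 EZ /D K0 addn0 m1 mul1n Hwu -/u Ev.
      apply/eqP; ring.
    have E5 : c^(Z-z) * c <= c^z.
      rewrite -expnSr; apply: leq_pexp2l; [exact: ltnW c1|clear -hZ zZ; lia].
    have E6 : c^z <= u by rewrite Ev; apply: leq_pmull.
    rewrite E4 in E5.
    have : 7 * (1 + b*b'*v) <= u.
      apply: leq_trans E6; apply: leq_trans E5; rewrite mulnC; apply: leq_mul => //.
    have X1 : b * b' <= b * b' * v by apply: leq_pmulr.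
    have X2 : b <= b * b' by apply: leq_pmulr.
    have X3 : u = b * b' + 2 * b + 1 by rewrite /u Eb; ring.
    rewrite X3 !mulnDr; clear -X1 X2; lia.
  apply: ltnW.
  rewrite -(ltn_exp2l _ _ c1).
  have h1 : c^(2*t) <= u*u by rewrite mulnC expnM expnS expn1; apply: leq_mul; apply: dvdn_leq.
  have h2 : u < b^3.
    have X1 : 2 * (b * b) <= b * b * b by rewrite [2 * _]mulnC leq_mul2l; clear -b1; lia.
    have X2 : 2 * b <= b * b by rewrite leq_mul2r; clear -b1; lia.
    have X3 : b^3 = b * b * b by rewrite !expnS expn0 muln1 mulnA.
    rewrite X3 /u (_ : b^2 = b * b); last by rewrite expnS expn1.
    clear -X1 X2 b1; lia.
  have h3 : b^3 * b^3 <= b^Y.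
    rewrite -expnD; apply: leq_pexp2l; [exact: ltnW b1|clear -EY kpos; lia].
  have h4 : u * u < b^3 * b^3 by apply: ltn_mul.
  clear -h1 h4 h3 E2; lia.
pose T := c ^ z * (2 * b + 1) + 3 * m * u.
have Id : (2*b+1) * T + 3 * c^Z = 4*u*c^z + 3* m*(u*u) + 3*b*(w*w)*K.
  rewrite /T EZ /D Hwu /u Eb; ring.
have C2 : c^(2*t) = c^ t * c^ t by rewrite mul2n -addnn expnD.
have dR : c^(2*t) %| (2*b+1) * T + 3 * c^Z.
  rewrite Id C2.
  have cw2 : c^ t %| w by rewrite Hwu dvdn_mull.
  rewrite dvdn_add // ?dvdn_add //.
  - by rewrite -mulnA dvdn_mull // dvdn_mul.
  - by rewrite dvdn_mull // dvdn_mul.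
  - by rewrite dvdn_mulr // dvdn_mull // dvdn_mul.
have dZ : c^(2*t) %| 3 * c^Z by rewrite dvdn_mull // dvdn_exp2l.
have dT : c^(2*t) %| (2*b+1) * T by rewrite (dvdn_add_eq dR) dZ.
have cop : coprime c (2*b+1).
  rewrite prime_coprime //; apply/negP => h.
  have h1 : c %| (2*b+1)*(2*b+1) + 3.
    have -> : (2*b+1)*(2*b+1) + 3 = 4 * u by rewrite /u; ring.
    by rewrite dvdn_mull.
  rewrite dvdn_addr in h1; last by rewrite dvdn_mull.
  have := dvdn_leq (isT : 0 < 3) h1; clear -c7; lia.
rewrite Gauss_dvdr in dT; last by rewrite coprimeXl.
exact: dT.
Qed.
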